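(* Let $s\ge1$ be an integer, let $(G,Z)$ be a monic plantation, and let $\mathcal{S}$ be a normal set of transitions of $(G,Z)$. Then there exists $X\subseteq Z$ with $|X|\le\phi(s)$ such that at most $|Z|$ members of $\mathcal{S}$ have no foot in $X$.
   Context: Graphs are finite and simple. Two subgraphs are anticomplete if their vertex sets are disjoint and no edge joins them. $G$ is $s\mathcal{O}$-free if no $s$ cycles of $G$ are pairwise vertex-disjoint and pairwise anticomplete. $Z\subseteq V(G)$ is cycle-hitting if every cycle of $G$ has a vertex in $Z$. A plantation is a pair $(G,Z)$ with $G$ an $s\mathcal{O}$-free graph and $Z$ cycle-hitting. Let $F=G\setminus Z$ and $N$ the set of vertices of $V(G)\setminus Z$ with a neighbour in $Z$. $(G,Z)$ is monic if $Z$ is stable and each vertex of $N$ has exactly one neighbour in $Z$. A transition is a path of $F$ of length at least one with both ends in $N$ and no internal vertex in $N$; a vertex of $Z$ adjacent to an end of a transition $P$ is a foot of $P$. A set $\mathcal{S}$ of transitions is normal if (i) for all distinct $P,Q\in\mathcal{S}$, either $P,Q$ are anticomplete or have a common end, and (ii) each $P\in\mathcal{S}$ has an edge belonging to no other member of $\mathcal{S}$. $\phi(s)\ge0$ denotes a number (which exists by the Erdős–Pósa theorem) such that every multigraph in which no $s$ cycles are pairwise vertex-disjoint has a set of at most $\phi(s)$ vertices meeting every cycle; in multigraphs, loops and pairs of parallel edges count as cycles. *)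

(* Defs.v *)
From mathcomp Require Import all_boot.
Set Implicit Arguments. Unset Strict Implicit. Unset Printing Implicit Defensive.

Section Graphs.
Variable T : finType.

Definition gcycle (e : rel T) (p : seq T) : bool :=
  [&& uniq p, 3 <= size p & cycle e p].

Definition anticomplete (e : rel T) (p q : seq T) : bool :=
  all (fun x => all (fun y => (x != y) && ~~ e x y) q) p.

Definition sO_free (s : nat) (e : rel T) : Prop :=
  ~ exists c : 'I_s -> seq T,
      (forall i, gcycle e (c i)) /\
      (forall i j, i != j -> anticomplete e (c i) (c j)).

Definition cycle_hitting (e : rel T) (Z : {set T}) : Prop :=
  forall p, gcycle e p -> has (fun x => x \in Z) p.

Definition plantation (s : nat) (e : rel T) (Z : {set T}) : Prop :=
  sO_free s e /\ cycle_hitting e Z.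

Definition Nset (e : rel T) (Z : {set T}) (x : T) : bool :=
  (x \notin Z) && [exists z in Z, e x z].

Definition monic (e : rel T) (Z : {set T}) : Prop :=
  (forall z1 z2, z1 \in Z -> z2 \in Z -> ~~ e z1 z2) /\
  (forall x, Nset e Z x -> #|[set z in Z | e x z]| = 1).

(* A transition: a path of F = G \ Z with at least one edge, both ends in N,
   no internal vertex in N. *)
Definition transition (e : rel T) (Z : {set T}) (p : seq T) : bool :=
  match p with
  | [::] => false
  | x :: p' =>
      [&& uniq p, 0 < size p', path e x p',
          all (fun y => y \notin Z) p,
          Nset e Z x, Nset e Z (last x p')
        & all (fun y => ~~ Nset e Z y) (take (size p').-1 p')]
  end.

Definition ends (p : seq T) : seq T :=
  match p with [::] => [::] | x :: p' => [:: x; last x p'] end.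

Definition pedges (p : seq T) : seq (T * T) := zip p (behead p).

Definition has_edge (p : seq T) (u v : T) : bool :=
  ((u, v) \in pedges p) || ((v, u) \in pedges p).

Definition normal_set (e : rel T) (S : seq (seq T)) : Prop :=
  (forall P Q, P \in S -> Q \in S -> P != Q ->
     anticomplete e P Q || has (fun x => x \in ends Q) (ends P)) /\
  (forall P, P \in S -> exists2 uv, uv \in pedges P &
     forall Q, Q \in S -> Q != P -> ~~ has_edge Q uv.1 uv.2).

Definition foot (e : rel T) (Z : {set T}) (P : seq T) (z : T) : bool :=
  (z \in Z) && has (e z) (ends P).

End Graphs.

(* Multigraphs on a finite vertex type V, given by a symmetric multiplicity
   function m (m v v = number of loops at v). *)
Definition mcycle (V : finType) (m : V -> V -> nat) (p : seq V) : bool :=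
  uniq p &&
  match p with
  | [:: v] => 0 < m v v
  | [:: u; v] => 1 < m u v
  | _ => (3 <= size p) && cycle (fun u v => 0 < m u v) p
  end.

Definition EP_bound (s k : nat) : Prop :=
  forall (V : finType) (m : V -> V -> nat),
    (forall u v, m u v = m v u) ->
    ~ (exists c : 'I_s -> seq V,
         (forall i, mcycle m (c i)) /\
         (forall i j, i != j -> all (fun x => x \notin c j) (c i))) ->
    exists X : {set V}, #|X| <= k /\
      forall p, mcycle m p -> has (fun x => x \in X) p.

(* Main.v *)
Require Import Defs.
From mathcomp Require Import all_boot.
From mathcomp Require Import zify.
From Stdlib Require Import Lia.
Set Implicit Arguments. Unset Strict Implicit. Unset Printing Implicit Defensive.

Section Gen.
Variable T : finType.

Lemma mem_zip2 (s t : seq T) a b : (a, b) \in zip s t -> (a \in s) && (b \in t).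
Proof.
elim: s t => [|x s IH] [|y t] //=; rewrite inE => /orP[/eqP[-> ->]|/IH/andP[h1 h2]].
  by rewrite !inE !eqxx.
by rewrite !inE h1 h2 !orbT.
Qed.

Lemma mem_pedges (s : seq T) a b : (a, b) \in pedges s -> (a \in s) && (b \in s).
Proof.
rewrite /pedges => /mem_zip2/andP[h1 h2]; by rewrite h1 (mem_behead h2).
Qed.

Lemma split_pedges (s : seq T) u v : (u, v) \in pedges s ->
  exists pre post, s = pre ++ u :: v :: post.
Proof.
rewrite /pedges; elim: s => [|x s IH] //=; case: s IH => [|y s] IH //=.
rewrite inE => /orP[/eqP[-> ->]|h].
  by exists [::], s.
have [pre [post ->]] := IH h.
by exists (x :: pre), post.
Qed.

Lemma path_pedges (r : rel T) x q : path r x q = all (fun st => r st.1 st.2) (pedges (x :: q)).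
Proof.
by elim: q x => [|y q IH] x //=; rewrite IH.
Qed.

End Gen.

Lemma path_connect (T : finType) (r : rel T) x q : path (connect r) x q -> connect r x (last x q).
Proof.
elim: q x => [|y q IH] x /=; first by move=> _; exact: connect0.
by move=> /andP[h1 h2]; apply: connect_trans h1 (IH _ h2).
Qed.

Lemma path_all_tgt (T : Type) (r : rel T) (P : pred T) x q :
  (forall a b, r a b -> P b) -> path r x q -> all P q.
Proof.
move=> hr; elim: q x => [|y q IH] x //= /andP[h1 h2].
by rewrite (hr _ _ h1) (IH _ h2).
Qed.

Lemma count_two (T : eqType) (pr : pred T) (S : seq T) P Q :
  P \in S -> Q \in S -> P != Q -> pr P -> pr Q -> 1 < count pr S.
Proof.
move=> hP hQ hPQ pP pQ; rewrite -size_filter.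
have : size [:: P; Q] <= size (filter pr S).
  apply: uniq_leq_size; first by rewrite /= inE hPQ.
  by move=> w; rewrite !inE => /orP[/eqP->|/eqP->]; rewrite mem_filter ?pP ?pQ.
by [].
Qed.

Lemma two_of_count (T : eqType) (pr : pred T) (S : seq T) :
  uniq S -> 1 < count pr S -> exists P Q, [/\ P \in S, Q \in S, P != Q, pr P & pr Q].
Proof.
move=> hu; rewrite -size_filter.
have hm0 : forall x, (x \in filter pr S) = pr x && (x \in S) := fun x => mem_filter pr x S.
move: (filter_uniq pr hu) hm0.
case: (filter pr S) => [|P [|Q l]] //= /andP[hPn _] hm _.
exists P, Q.
have := hm P; rewrite inE eqxx /= => /esym/andP[h1 h2].
have := hm Q; rewrite !inE eqxx orbT /= => /esym/andP[h3 h4].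
split => //; apply: contraNneq hPn => ->; by rewrite inE eqxx.
Qed.
Section Forest.
Variables (I : eqType) (V : finType) (g1 g2 : I -> V).

Definition fe (j : I) (x y : V) : bool :=
  ((g1 j == x) && (g2 j == y)) || ((g1 j == y) && (g2 j == x)).
Definition erel (L : seq I) : rel V := fun x y => has (fun j => fe j x y) L.

Lemma forest_inv (A : {set V}) E :
  all (fun i => (g1 i \in A) && (g2 i \in A)) E ->
  (forall i L1 L2, E = L1 ++ i :: L2 -> ~~ connect (erel L2) (g1 i) (g2 i)) ->
  exists lab : V -> V, (forall x y, lab x = lab y -> connect (erel E) x y)
     /\ #|lab @: A| + size E <= #|A|.
Proof.
elim: E => [|i L IH] hall hac.
  exists id; split; first by move=> x y /= ->; exact: connect0.
  by rewrite card_imset ?addn0 //; move=> x y.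
move: hall => /= /andP[/andP[ha hb] hL].
have [lab [hlab hcard]] := IH hL (fun j L1 L2 h => hac j (i :: L1) L2 (congr1 (cons i) h)).
set a := g1 i; set b := g2 i.
have hn : lab a != lab b.
  apply/eqP => h; move: (hac i [::] L erefl); rewrite (hlab _ _ h) //.
have sub : forall x y, connect (erel L) x y -> connect (erel (i :: L)) x y.
  apply: connect_sub => x y hxy; apply: connect1; rewrite /erel /=; apply/orP; right; exact: hxy.
have eab : erel (i :: L) a b by rewrite /erel /= /fe !eqxx.
have eba : erel (i :: L) b a by rewrite /erel /= /fe !eqxx orbT.
exists (fun x : V => if lab x == lab b then lab a else lab x).
split.
  move=> x y /=.
  case: (eqVneq (lab x) (lab b)) => hx; case: (eqVneq (lab y) (lab b)) => hy.
  - move=> _; apply: connect_trans (sub _ _ (hlab _ _ hx)) (sub _ _ (hlab _ _ (esym hy))).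
  - move=> h; apply: connect_trans (sub _ _ (hlab _ _ hx)) _.
    apply: connect_trans (connect1 eba) (sub _ _ (hlab _ _ h)).
  - move=> h; apply: connect_trans (sub _ _ (hlab _ _ h)) _.
    apply: connect_trans (connect1 eab) (sub _ _ (hlab _ _ (esym hy))).
  - by move=> h; apply: sub; apply: hlab.
have hsub : [set (if lab x == lab b then lab a else lab x) | x in A] \subset (lab @: A) :\ lab b.
  apply/subsetP => w /imsetP[x hx ->]; rewrite in_setD1.
  case: (eqVneq (lab x) (lab b)) => h.
    by rewrite hn imset_f.
  by rewrite h imset_f.
have := subset_leq_card hsub.
have hbin : lab b \in lab @: A by rewrite imset_f.
rewrite (cardsD1 (lab b) (lab @: A)) hbin /= in hcard.
move=> hle; move: hcard => h2; rewrite /=; lia.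
Qed.

Lemma forest_count (A : {set V}) E :
  all (fun i => (g1 i \in A) && (g2 i \in A)) E ->
  (forall i L1 L2, E = L1 ++ i :: L2 -> ~~ connect (erel L2) (g1 i) (g2 i)) ->
  size E <= #|A|.
Proof.
move=> h1 h2; have [lab [_ h]] := forest_inv h1 h2.
exact: leq_trans (leq_addl _ _) h.
Qed.
End Forest.
Section Main.
Variables (T : finType) (e : rel T) (esym : symmetric e) (eirr : irreflexive e).
Variables (Z : {set T}) (hstab : forall z1 z2, z1 \in Z -> z2 \in Z -> ~~ e z1 z2).
Variable (hmon : forall x, Nset e Z x -> #|[set z in Z | e x z]| = 1).
Variables (S : seq (seq T)) (Suniq : uniq S) (Strans : all (transition e Z) S).
Variable (Snormal : normal_set e S).
Variable x0 : T.

Definition fo x := odflt x [pick z in Z | e x z].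
Definition gh (P : seq T) := fo (head x0 P).
Definition gl (P : seq T) := fo (last x0 P).
Definition mH a b := count (fun P => fe gh gl P a b) S.
Definition W (c : seq T) : {set T} :=
  [set w | ((w \in c) && (w \in Z)) || has (fun P => [&& gh P \in c, gl P \in c & w \in P]) S].

Lemma fo_spec x : Nset e Z x ->
  [/\ fo x \in Z, e x (fo x) & forall z, z \in Z -> e x z -> z = fo x].
Proof.
move=> hN; have h1 := hmon hN; move: hN => /andP[_ /existsP[z0 /andP[hz0 hxz0]]].
rewrite /fo; case: pickP => [z /andP[hz hxz] | h] /=.
  split => // z' hz' hxz'.
  have /cards1P[w hw] : #|[set z in Z | e x z]| == 1 by rewrite h1.
  have : z \in [set z in Z | e x z] by rewrite inE hz hxz.
  have : z' \in [set z in Z | e x z] by rewrite inE hz' hxz'.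
  by rewrite hw !inE => /eqP-> /eqP->.
by move: (h z0); rewrite hz0 hxz0.
Qed.

Lemma transP P : P \in S -> exists x p', P = x :: p' /\
  [/\ uniq (x :: p'), 0 < size p', path e x p', all (fun y => y \notin Z) (x :: p')
   & [/\ Nset e Z x, Nset e Z (last x p') & all (fun y => ~~ Nset e Z y) (take (size p').-1 p')]].
Proof.
move=> hP; have := allP Strans P hP.
case: P hP => [|x p'] //= _ /and5P[h1 h2 h3 h4 /and3P[h5 h6 h7]].
exists x, p'; split => //; split => //.
Qed.

Lemma notZ P w : P \in S -> w \in P -> w \notin Z.
Proof.
move=> /transP[x [p' [-> [_ _ _ h _]]]] hw; exact: (allP h w hw).
Qed.

Lemma gh_spec P : P \in S -> [/\ gh P \in Z, e (head x0 P) (gh P), head x0 P \in P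
   & head x0 P \in ends P].
Proof.
move=> /transP[x [p' [-> [_ _ _ _ [hN _ _]]]]].
have [h1 h2 _] := fo_spec hN; by rewrite /gh /= h1 h2 !inE eqxx.
Qed.

Lemma gl_spec P : P \in S -> [/\ gl P \in Z, e (last x0 P) (gl P), last x0 P \in P
   & last x0 P \in ends P].
Proof.
move=> /transP[x [p' [-> [_ _ _ _ [_ hN _]]]]].
have [h1 h2 _] := fo_spec hN; rewrite /gl /= h1 h2 !inE eqxx orbT; split => //.
by have := mem_last x p'; rewrite inE.
Qed.

Lemma ends_foot P w : P \in S -> w \in ends P -> (fo w == gh P) || (fo w == gl P).
Proof.
move=> /transP[x [p' [-> _]]]; by rewrite /= !inE => /orP[/eqP->|/eqP->];
  rewrite /gh /gl /= eqxx ?orbT.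
Qed.

Lemma end_foot P a b : P \in S -> b \in P -> a \in Z -> e b a -> (a == gh P) || (a == gl P).
Proof.
move=> hP hb ha hba.
have hbZ := notZ hP hb.
have hN : Nset e Z b by rewrite /Nset hbZ; apply/existsP; exists a; rewrite ha hba.
have [_ _ hu] := fo_spec hN.
have ea := hu a ha hba.
move: hP => /transP[x [p' [hPe [_ _ _ _ [_ _ hint]]]]].
move: hb; rewrite hPe inE => /orP[/eqP hbx|hb].
  by rewrite /gh /= ea hbx eqxx.
move: hint hb; case/lastP: p' hPe => [|q y] hPe //.
rewrite size_rcons /= -cats1 take_size_cat // mem_cat inE => hint /orP[hq|/eqP hby].
  by move: (allP hint b hq); rewrite hN.
by rewrite /gl /= last_cat /= ea hby eqxx orbT.
Qed.


Lemma W_anti c d a b : all (fun x => x \notin d) c -> a \in W c -> b \in W d ->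
  (a != b) && ~~ e a b.
Proof.
move=> hcd; rewrite !inE => /orP[/andP[hac haZ]|/hasP[P hP /and3P[hPc1 hPc2 haP]]]
  /orP[/andP[hbd hbZ]|/hasP[Q hQ /and3P[hQd1 hQd2 hbQ]]].
- rewrite (hstab haZ hbZ) andbT; apply/eqP => hab; move: (allP hcd a hac); by rewrite hab hbd.
- have hbZ := notZ hQ hbQ; apply/andP; split.
    by apply/eqP => hab; rewrite -hab haZ in hbZ.
  apply/negP => hab; rewrite esym in hab.
  have := end_foot hQ hbQ haZ hab => /orP[/eqP h|/eqP h];
    move: (allP hcd a hac); by rewrite h ?hQd1 ?hQd2.
- have haZ := notZ hP haP; apply/andP; split.
    by apply/eqP => hab; rewrite hab hbZ in haZ.
  apply/negP => hab.
  have := end_foot hP haP hbZ hab => /orP[/eqP h|/eqP h].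
    by move: (allP hcd b); rewrite h hPc1 -h hbd => /(_ isT).
  by move: (allP hcd b); rewrite h hPc2 -h hbd => /(_ isT).
- case: (eqVneq P Q) => [ePQ|hPQ].
    by move: (allP hcd _ hPc1); rewrite ePQ hQd1.
  have := proj1 Snormal P Q hP hQ hPQ => /orP[hanti|/hasP[w hwP hwQ]].
    exact: (allP (allP hanti a haP) b hbQ).
  have h1 := ends_foot hQ hwQ; have h2 := ends_foot hP hwP.
  have hwd : fo w \in d by case/orP: h1 => /eqP->.
  have hwc : fo w \in c by case/orP: h2 => /eqP->.
  by move: (allP hcd _ hwc); rewrite hwd.
Qed.


Definition ep c u v : rel T := fun a b =>
  [&& e a b, a \in W c, b \in W c & ~~ (((a == u) && (b == v)) || ((a == v) && (b == u)))].

Lemma ep_sym c u v : symmetric (ep c u v).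
Proof.
move=> a b; rewrite /ep esym.
by case: (e b a); case: (a \in W c); case: (b \in W c); case: (a == u); case: (a == v);
  case: (b == u); case: (b == v).
Qed.

Lemma conn_sym c u v a b : connect (ep c u v) a b = connect (ep c u v) b a.
Proof. exact: (sym_connect_sym (ep_sym c u v)). Qed.

Lemma conn_path c u v x q : path e x q -> all (fun w => w \in W c) (x :: q) ->
  (forall st, st \in pedges (x :: q) -> (st != (u, v)) && (st != (v, u))) ->
  connect (ep c u v) x (last x q).
Proof.
move=> hp hW hne; apply/connectP; exists q => //.
rewrite path_pedges; apply/allP => [[a b]] hst /=.
have hab : e a b by rewrite path_pedges in hp; exact: (allP hp (a, b) hst).
have /andP[ha hb] := mem_pedges hst.
have := hne _ hst; rewrite !xpair_eqE => /andP[h1 h2].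
by rewrite /ep hab (allP hW a ha) (allP hW b hb) negb_or h1 h2.
Qed.

Lemma pedges_avoid (s : seq T) u v st : (u \notin s) || (v \notin s) ->
  st \in pedges s -> (st != (u, v)) && (st != (v, u)).
Proof.
case: st => a b h /mem_pedges/andP[ha hb].
apply/andP; split; apply/eqP => [[ea eb]]; subst;
  by move: h; rewrite ha hb.
Qed.

Lemma conn_foot c u v w : u \notin Z -> v \notin Z -> w \in W c -> fo w \in W c ->
  fo w \in Z -> e w (fo w) -> connect (ep c u v) w (fo w).
Proof.
move=> hu hv hw hf hfZ he; apply: connect1.
have nu : fo w != u by apply/eqP => h; rewrite -h hfZ in hu.
have nv : fo w != v by apply/eqP => h; rewrite -h hfZ in hv.
by rewrite /ep he hw hf (negbTE nu) (negbTE nv) !andbF.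
Qed.

Lemma inW_P c P w : P \in S -> gh P \in c -> gl P \in c -> w \in P -> w \in W c.
Proof.
move=> hP h1 h2 hw; rewrite inE; apply/orP; right; apply/hasP; exists P => //.
by rewrite h1 h2 hw.
Qed.

Lemma inW_c c w : w \in c -> w \in Z -> w \in W c.
Proof. by move=> h1 h2; rewrite inE h1 h2. Qed.

Lemma conn_Q c u v Q a b : Q \in S -> ~~ has_edge Q u v -> u \notin Z -> v \notin Z ->
  a \in c -> b \in c -> fe gh gl Q a b -> connect (ep c u v) a b.
Proof.
move=> hQ hnot hu hv ha hb.
suff main : gh Q \in c -> gl Q \in c -> connect (ep c u v) (gh Q) (gl Q).
  rewrite /fe => /orP[/andP[/eqP h1 /eqP h2]|/andP[/eqP h1 /eqP h2]].
    by rewrite -h1 -h2; apply: main; rewrite ?h1 ?h2.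
  by rewrite conn_sym -h1 -h2; apply: main; rewrite ?h1 ?h2.
move=> h1 h2.
have [z1 ez1 hx1 _] := gh_spec hQ.
have [z2 ez2 hx2 _] := gl_spec hQ.
have hWQ : forall w, w \in Q -> w \in W c by move=> w; apply: inW_P.
have c1 : connect (ep c u v) (gh Q) (head x0 Q).
  rewrite conn_sym; apply: conn_foot => //; [exact: hWQ | exact: inW_c].
have c3 : connect (ep c u v) (last x0 Q) (gl Q).
  apply: conn_foot => //; [exact: hWQ | exact: inW_c].
apply: connect_trans c1 (connect_trans _ c3).
have [x [p' [hQe [_ _ hp _ _]]]] := transP hQ.
rewrite hQe /=; apply: conn_path => //.
  by apply/allP => w hw; apply: hWQ; rewrite hQe.
move=> st hst; apply/andP; split; apply/eqP => hst2; move: hnot;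
  by rewrite /has_edge hQe -hst2 hst ?orbT.
Qed.

Definition seqpath (s : seq T) := if s is y :: s' then path e y s' else true.

Lemma seqpath_cat s1 s2 : seqpath (s1 ++ s2) -> seqpath s1 && seqpath s2.
Proof.
case: s1 => [|y s1] //= ; rewrite cat_path => /andP[-> h2] /=.
by case: s2 h2 => //= z s2 /andP[_ ->].
Qed.

Lemma conn_P1 c P1 u v : P1 \in S -> (u, v) \in pedges P1 -> gh P1 \in c -> gl P1 \in c ->
  connect (ep c u v) (gl P1) (gh P1) -> connect (ep c u v) v u.
Proof.
move=> hP hpe h1 h2 hcon.
have /andP[huP hvP] := mem_pedges hpe.
have hu := notZ hP huP; have hv := notZ hP hvP.
have hWP : forall w, w \in P1 -> w \in W c by move=> w; apply: inW_P.
have [z1 ez1 hx1 _] := gh_spec hP.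
have [z2 ez2 hx2 _] := gl_spec hP.
have c1 : connect (ep c u v) (gh P1) (head x0 P1).
  rewrite conn_sym; apply: conn_foot => //; [exact: hWP | exact: inW_c].
have c3 : connect (ep c u v) (last x0 P1) (gl P1).
  apply: conn_foot => //; [exact: hWP | exact: inW_c].
have [pre [post heq]] := split_pedges hpe.
have hun : uniq P1 by have [x [p' [-> [hu' _ _ _ _]]]] := transP hP.
have hsp : seqpath P1 by have [x [p' [-> [_ _ hp _ _]]]] := transP hP.
rewrite heq -cat1s catA in hsp hun.
move: hsp => /seqpath_cat/andP[hsp1 hsp2].
move: hun; rewrite cat_uniq => /and3P[_ hhas _].
have hvn : v \notin (pre ++ [:: u]).
  by apply: contra hhas => hv'; apply/hasP; exists v; rewrite ?inE ?eqxx.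
have hun2 : u \notin v :: post.
  by apply: contra hhas => hu'; apply/hasP; exists u; rewrite // mem_cat inE eqxx orbT.
have hWs : forall w, w \in pre ++ u :: v :: post -> w \in W c by rewrite -heq.
have ca : connect (ep c u v) v (last x0 P1).
  have -> : last x0 P1 = last v post by rewrite heq last_cat.
  apply: conn_path => //.
    by apply/allP => w hw; apply: hWs; rewrite mem_cat; apply/orP; right; rewrite inE hw orbT.
  by move=> st hst; apply: pedges_avoid _ hst; rewrite hun2.
have hWs' : forall w, w \in pre ++ [:: u] -> w \in W c.
  move=> w hw; apply: hWs; move: hw; rewrite !mem_cat !inE.
  by case/orP => [->//|->]; rewrite orbT.
have cb : connect (ep c u v) (head x0 P1) u.
  rewrite heq; clear hhas hWs; case: pre heq hvn hsp1 hWs' => [|y pre'] heq hvn hsp1 hWs' /=; first exact: connect0.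
  have := conn_path (c := c) (u := u) (v := v) (x := y) (q := rcons pre' u).
  rewrite last_rcons; apply.
  - by rewrite -cats1.
  - by apply/allP => w hw; apply: hWs'; rewrite /= cats1.
  - by move=> st hst; apply: pedges_avoid _ hst; rewrite -cats1 hvn orbT.
apply: connect_trans ca (connect_trans c3 (connect_trans hcon (connect_trans c1 cb))).
Qed.

Lemma cyc_from_conn c u v : e u v -> v \in W c -> connect (ep c u v) v u ->
  exists q, gcycle e q /\ {subset q <= W c}.
Proof.
move=> huv hv /connectP[p hp hlast]; move: hlast.
case: (shortenP hp) => p' hp' hu _ hl.
exists (v :: p'); split; last first.
  move=> w; rewrite inE => /orP[/eqP->//|hw].
  have := path_all_tgt (P := fun w => w \in W c) _ hp'.
  by move=> /(_ (fun a b h => proj1 (andP (proj2 (andP (proj2 (andP h))))))) /allP; apply.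
rewrite /gcycle hu /=; apply/andP; split.
  case: p' hp' hu hl => [|w [|w2 p']] //=.
    by move=> _ _ hl; rewrite -hl eirr in huv.
  move=> /andP[h _] _ hl; move: h; rewrite /ep -hl !eqxx /= orbT !andbF.
  by [].
rewrite rcons_path -hl huv andbT.
by apply: sub_path hp' => a b /andP[].
Qed.


Lemma lift_from_P1 c P1 : P1 \in S -> gh P1 \in c -> gl P1 \in c ->
  (forall u v, (forall Q, Q \in S -> Q != P1 -> ~~ has_edge Q u v) -> u \notin Z -> v \notin Z ->
     connect (ep c u v) (gl P1) (gh P1)) ->
  exists q, gcycle e q /\ {subset q <= W c}.
Proof.
move=> hP h1 h2 hc.
have [[u v] hpe hpriv] := proj2 Snormal P1 hP.
have /andP[huP hvP] := mem_pedges hpe.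
have hu := notZ hP huP; have hv := notZ hP hvP.
have hcon := hc u v (fun Q hQ hne => hpriv Q hQ hne) hu hv.
apply: (cyc_from_conn (u := u)).
- have [x [p' [hPe [_ _ hp _ _]]]] := transP hP.
  rewrite path_pedges -hPe in hp; exact: (allP hp _ hpe).
- exact: inW_P hP h1 h2 hvP.
- exact: conn_P1 hP hpe h1 h2 hcon.
Qed.

Lemma fe_conn c u v P1 z1 z2 : fe gh gl P1 z1 z2 -> connect (ep c u v) z1 z2 ->
  connect (ep c u v) (gl P1) (gh P1).
Proof.
rewrite /fe => /orP[/andP[/eqP-> /eqP->]|/andP[/eqP-> /eqP->]] //.
by rewrite conn_sym.
Qed.

Lemma fe_left P a b : fe gh gl P a b -> (a == gh P) || (a == gl P).
Proof. by rewrite /fe => /orP[/andP[/eqP<- _]|/andP[_ /eqP<-]]; rewrite eqxx ?orbT. Qed.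

Lemma fe_symm P a b : fe gh gl P a b = fe gh gl P b a.
Proof. by rewrite /fe orbC. Qed.

Lemma fe_mem P a b w : fe gh gl P a b -> (w == gh P) || (w == gl P) -> (w == a) || (w == b).
Proof.
rewrite /fe => /orP[/andP[/eqP-> /eqP->]|/andP[/eqP-> /eqP->]] //.
by rewrite orbC.
Qed.

Lemma mH_has a b : 0 < mH a b -> exists2 Q, Q \in S & fe gh gl Q a b.
Proof. by rewrite /mH -has_count => /hasP. Qed.

Lemma fe_in (c : seq T) Q a b : fe gh gl Q a b -> a \in c -> b \in c -> (gh Q \in c) && (gl Q \in c).
Proof. by rewrite /fe => /orP[/andP[/eqP-> /eqP->]|/andP[/eqP-> /eqP->]] -> ->. Qed.

Lemma cycle_lift c : mcycle mH c -> exists q, gcycle e q /\ {subset q <= W c}.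
Proof.
case hc: c => [|z1 [|z2 [|r1 rest]]]; rewrite /mcycle //=.
- move=> /mH_has[P1 hP hfe].
  have hz : z1 \in c by rewrite hc inE eqxx.
  have /andP[h1 h2] := fe_in hfe hz hz.
  rewrite -hc; apply: (lift_from_P1 hP h1 h2) => u v _ _ _.
  move: hfe; rewrite /fe orbb => /andP[/eqP-> /eqP->]; exact: connect0.
- move=> /andP[_ hm]; have [P [Q [hP hQ hPQ hfP hfQ]]] := two_of_count Suniq hm.
  have hz1 : z1 \in c by rewrite hc inE eqxx.
  have hz2 : z2 \in c by rewrite hc !inE eqxx orbT.
  have /andP[h1 h2] := fe_in hfP hz1 hz2.
  rewrite -hc; apply: (lift_from_P1 hP h1 h2) => u v hpriv hu hv.
  apply: (fe_conn hfP); apply: (conn_Q hQ _ hu hv hz1 hz2 hfQ).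
  by apply: hpriv; rewrite // eq_sym.
- move=> /andP[hun /andP[m12 hcyc]].
  have hz1 : z1 \in c by rewrite hc inE eqxx.
  have hz2 : z2 \in c by rewrite hc !inE eqxx orbT.
  have hr1 : r1 \in c by rewrite hc !inE eqxx !orbT.
  move: hcyc => /andP[m2r hpath].
  have [P1 hP hfe] := mH_has m12.
  have /andP[h1 h2] := fe_in hfe hz1 hz2.
  move: hun => /and4P[nz1 nz2 nr1 hurest].
  rewrite -hc; apply: (lift_from_P1 hP h1 h2) => u v hpriv hu hv.
  apply: (fe_conn hfe); rewrite conn_sym.
  have [Q hQ hfQ] := mH_has m2r.
  have hQP : Q != P1.
    apply/eqP => hQP; rewrite hQP in hfQ.
    have hfQs : fe gh gl P1 r1 z2 by rewrite fe_symm.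
    have := fe_mem hfe (fe_left hfQs).
    move: nz1 nz2; rewrite !inE.
    move=> n1 n2; case/orP => /eqP hh; move: n1 n2; rewrite hh.
    1,2: by rewrite !eqxx /= ?orbT.
  apply: connect_trans (conn_Q hQ (hpriv Q hQ hQP) hu hv hz2 hr1 hfQ) _.
  have := @path_connect _ (ep c u v) r1 (rcons rest z1); rewrite last_rcons; apply.
  apply: (sub_in_path (P := [pred w | (w \in c) && (w != z2)])) hpath; last first.
    rewrite /= hr1 /=; apply/andP; split.
      by apply/eqP => h; move: nz2; rewrite h !inE eqxx.
    apply/allP => w; rewrite mem_rcons inE => /orP[/eqP->|hw].
      rewrite /= hz1 /=; move: nz1; rewrite !inE eq_sym.
      by case/norP.
    rewrite /= hc !inE hw !orbT /=; apply/eqP => h; move: nz2; by rewrite -h !inE hw !orbT.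
  move=> a b /andP[ha na] /andP[hb nb] /= hm.
  have [Q' hQ' hfQ'] := mH_has hm.
  have hQ'P : Q' != P1.
    apply/eqP => hQP2; rewrite hQP2 in hfQ'.
    have hfs : fe gh gl P1 z2 z1 by rewrite fe_symm.
    have := fe_mem hfQ' (fe_left hfs).
    by rewrite eq_sym (negbTE na) eq_sym (negbTE nb).
  exact: (conn_Q hQ' (hpriv Q' hQ' hQ'P) hu hv ha hb hfQ').
Qed.


Lemma cycle_lift_b c : mcycle mH c -> exists q : seq T, gcycle e q && all (fun w => w \in W c) q.
Proof.
move=> /cycle_lift[q [h1 h2]]; exists q; rewrite h1 /=; exact/allP.
Qed.

Lemma nofoot_gh X0 Q : Q \in S -> ~~ [exists z in X0 :&: Z, foot e Z Q z] ->
  (gh Q \notin X0) && (gl Q \notin X0).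
Proof.
move=> hQ hnf; have [hZ1 he1 _ hend1] := gh_spec hQ; have [hZ2 he2 _ hend2] := gl_spec hQ.
apply/andP; split; apply/negP => h; apply: (negP hnf); apply/existsP.
  exists (gh Q); rewrite inE h hZ1 /= /foot hZ1 /=; apply/hasP; exists (head x0 Q) => //.
  by rewrite esym.
exists (gl Q); rewrite inE h hZ2 /= /foot hZ2 /=; apply/hasP; exists (last x0 Q) => //.
by rewrite esym.
Qed.

Lemma no_hit_cycle (X0 : {set T}) q : ~~ has (fun x => x \in X0) q -> mcycle mH q ->
  (forall p, mcycle mH p -> has (fun x => x \in X0) p) -> False.
Proof. by move=> hn hm hhit; move: (hhit q hm); rewrite (negbTE hn). Qed.

Lemma main_sec (s phis : nat) (hphi : EP_bound s phis) (hfree : sO_free s e) :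
  exists X : {set T}, [/\ X \subset Z, #|X| <= phis &
    count (fun P => ~~ [exists z in X, foot e Z P z]) S <= #|Z| ].
Proof.
have msym : forall u v, mH u v = mH v u.
  by move=> u v; rewrite /mH; apply: eq_count => P; rewrite fe_symm.
have hnoc : ~ (exists c : 'I_s -> seq T, (forall i, mcycle mH (c i)) /\
    (forall i j, i != j -> all (fun x => x \notin c j) (c i))).
  move=> [c [hc hdis]]; apply: hfree.
  exists (fun i => xchoose (cycle_lift_b (hc i))); split.
    by move=> i; have /andP[h _] := xchooseP (cycle_lift_b (hc i)).
  move=> i j hij; apply/allP => a ha; apply/allP => b hb.
  have /andP[_ hi] := xchooseP (cycle_lift_b (hc i)).
  have /andP[_ hj] := xchooseP (cycle_lift_b (hc j)).
  exact: W_anti (hdis i j hij) (allP hi a ha) (allP hj b hb).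
have [X0 [hX0 hhit]] := hphi T mH msym hnoc.
exists (X0 :&: Z); split; first exact: subsetIr.
  exact: leq_trans (subset_leq_card (subsetIl X0 Z)) hX0.
rewrite -size_filter; apply: (forest_count (g1 := gh) (g2 := gl) (A := Z)).
  apply/allP => P; rewrite mem_filter => /andP[_ hP].
  by have [-> _ _ _] := gh_spec hP; have [-> _ _ _] := gl_spec hP.
move=> P L1 L2 hE; apply/negP => hcon.
have hfu := filter_uniq (fun P => ~~ [exists z in X0 :&: Z, foot e Z P z]) Suniq.
have hPf : P \in filter (fun P => ~~ [exists z in X0 :&: Z, foot e Z P z]) S.
  by rewrite hE mem_cat inE eqxx orbT.
move: hPf; rewrite mem_filter => /andP[hnfP hPS].
have /andP[nP1 nP2] := nofoot_gh hPS hnfP.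
have hL2 : forall Q, Q \in L2 -> [/\ Q \in S, gh Q \notin X0 & gl Q \notin X0].
  move=> Q hQ; have : Q \in filter (fun P => ~~ [exists z in X0 :&: Z, foot e Z P z]) S.
    by rewrite hE mem_cat inE hQ !orbT.
  rewrite mem_filter => /andP[hnf hQS]; have /andP[n1 n2] := nofoot_gh hQS hnf.
  by split.
have hPL2 : P \notin L2.
  by move: hfu; rewrite hE cat_uniq => /and3P[_ _ /andP[]].
have hfeP : fe gh gl P (gh P) (gl P) by rewrite /fe !eqxx.
case: (eqVneq (gh P) (gl P)) => heq.
  apply: (no_hit_cycle (q := [:: gh P]) _ _ hhit); first by rewrite /= orbF.
  rewrite /mcycle /= /mH -has_count; apply/hasP; exists P => //.
  by rewrite {2}heq.
move: hcon => /connectP[p hp hl]; move: hl.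
case: (shortenP hp) => p' hp' hu _ hl.
have hall : all (fun w => w \notin X0) p'.
  apply: (path_all_tgt _ hp') => a b /hasP[Q hQ hfQ].
  have [_ h1 h2] := hL2 Q hQ.
  have hfQ' : fe gh gl Q b a by rewrite fe_symm.
  by case/orP: (fe_left hfQ') => /eqP->.
have hnh : ~~ has (fun x => x \in X0) (gh P :: p').
  apply/hasP => [[w]]; rewrite inE => /orP[/eqP->|hw]; first by rewrite (negbTE nP1).
  by rewrite (negbTE (allP hall w hw)).
apply: (no_hit_cycle hnh _ hhit).
have pos : forall a b, erel gh gl L2 a b -> 0 < mH a b.
  move=> a b /hasP[Q hQ hfQ]; have [hQS _ _] := hL2 Q hQ.
  by rewrite /mH -has_count; apply/hasP; exists Q.
case: p' hp' hu hl hall hnh => [|b1 [|b2 rest]] hp' hu hl hall hnh.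
- by move: heq; rewrite hl /= eqxx.
- move: hp' => /= /andP[/hasP[Q hQ hfQ] _].
  have [hQS _ _] := hL2 Q hQ.
  move: hl => /= hl; rewrite -hl in hfQ hu *; rewrite /mcycle /=.
  apply/andP; split; first by move: hu; rewrite /= andbT.
  apply: (count_two hPS hQS _ hfeP hfQ).
  by apply/eqP => hPQ; move: hPL2; rewrite hPQ hQ.
- rewrite /mcycle hu /=.
  change (path (fun u v => 0 < mH u v) (gh P) (rcons [:: b1, b2 & rest] (gh P))).
  have hp2 := sub_path pos hp'.
  rewrite rcons_path hp2 /=.
  move: hl => /= hl; rewrite -hl /mH -has_count; apply/hasP; exists P => //.
  by rewrite fe_symm.
Qed.

End Main.

Theorem mainTheorem12 (s : nat) (hs : 1 <= s) (phis : nat) (hphi : EP_bound s phis)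
  (T : finType) (e : rel T) (esym : symmetric e) (eirr : irreflexive e)
  (Z : {set T}) (hplant : plantation s e Z) (hmonic : monic e Z)
  (S : seq (seq T)) (Suniq : uniq S) (Strans : all (transition e Z) S)
  (Snormal : normal_set e S) :
  exists X : {set T}, [/\ X \subset Z, #|X| <= phis &
    count (fun P => ~~ [exists z in X, foot e Z P z]) S <= #|Z| ].
Proof.
case hS: S => [|P0 S'].
  by exists set0; rewrite sub0set cards0.
rewrite -hS.
have hP0 : P0 \in S by rewrite hS inE eqxx.
have [x0 _] : exists x0 : T, True.
  by move: (allP Strans P0 hP0); case: (P0) => [|x0 p0] //= _; exists x0.
exact: (main_sec esym eirr (proj1 hmonic) (proj2 hmonic) Suniq Strans Snormal x0 hphi (proj1 hplant)).
Qed.
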